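(* Let $n\geq 2$, $a>1$, and let $u'':[1,a]\to[0,\infty)$ satisfy $u''(x)\geq k(x-1)(a-x)$ on $[1,a]$ for a constant $k>0$. Let $1<b_\infty<b_0<a$ be constants and suppose $b:[0,T)\to\mathbb{R}$ solves the initial value problem $b(0)=b_0$, $$\dot b=-\frac{k\,b_\infty(b_\infty-1)(a^2-b_0^2)(b-b_\infty)b^3}{a(a^2-b_\infty^2)(2a^2-b_\infty^2)^2}.$$ Then $$g_t(y):=\sqrt{\frac{a^2-b^2}{a^2-b_\infty^2}y^2+b^2},\qquad b=b(t),$$ is a sub-solution of the equation $$\dot h=u''(h(y))\left(\frac{h''}{1+h'^2}+(n-1)\frac{yh'-h}{y^2+h^2}\right)$$ for $y\in\left[-\sqrt{a^2-b_\infty^2},\sqrt{a^2-b_\infty^2}\right]$, in the sense that $\dot g_t-u''(g_t)\left(\frac{g_t''}{1+g_t'^2}+(n-1)\frac{yg_t'-g_t}{y^2+g_t^2}\right)\geq 0$ there.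
   Context: Dots denote $t$-derivatives and primes denote $y$-derivatives. The function $u''$ comes from a Calabi-symmetric K\''ahler form on the blowup of $\mathbb{P}^n$ at a point, expressed in the Legendre coordinate $x\in[1,a]$. *)

(* Defs.v *)
From Stdlib Require Import Reals.
From Coquelicot Require Import Coquelicot.
Open Scope R_scope.

Definition gbar (a binf : R) (b : R -> R) (t y : R) : R :=
  sqrt ((a ^ 2 - (b t) ^ 2) / (a ^ 2 - binf ^ 2) * y ^ 2 + (b t) ^ 2).

Definition flow_op (n : nat) (upp : R -> R) (h : R -> R) (y : R) : R :=
  upp (h y) * (Derive_n h 2 y / (1 + (Derive h y) ^ 2)
               + (INR n - 1) * (y * Derive h y - h y) / (y ^ 2 + (h y) ^ 2)).

(* Main.v *)
Require Import Defs.
From Stdlib Require Import Reals Lra Psatz Classical.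
From Coquelicot Require Import Coquelicot.
Open Scope R_scope.

Lemma exp_mono x y : x <= y -> exp x <= exp y.
Proof. intros [H|H]; [left; apply exp_increasing; exact H| subst; lra]. Qed.

Section S.
Variables (K b0 binf T : R) (b : R -> R).
Hypotheses (HK : 0 < K) (Hbi : 0 < binf) (Hb0 : binf < b0) (HT : 0 < T) (Hb00 : b 0 = b0)
  (Hd : forall t, 0 <= t < T -> is_derive b t (-(K*(b t - binf)*(b t)^3))).

Lemma dec_part s : 0 <= s < T -> (forall u, 0 <= u <= s -> binf < b u) -> b s <= b0.
Proof.
intros Hs Hu.
destruct (Req_dec s 0) as [->|Hs0]; [lra|].
destruct (MVT_cor2 b (fun u => -(K*(b u - binf)*(b u)^3)) 0 s) as [c [Hc1 Hc2]]; [lra| |].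
- intros c Hc. apply is_derive_Reals. apply Hd. lra.
- assert (binf < b c) by (apply Hu; lra).
  assert (0 < K*(b c - binf)*(b c)^3).
  { apply Rmult_lt_0_compat; [nra|]. apply pow_lt; lra. }
  nra.
Qed.

Definition L := K * b0^3.

Lemma lower s : 0 <= s < T -> (forall u, 0 <= u <= s -> binf < b u) ->
  b s - binf >= (b0 - binf) * exp (-(L*s)).
Proof.
intros Hs Hu.
set (h := fun v => (b v - binf) * exp (L*v)).
assert (Hh : h s >= h 0).
{ destruct (Req_dec s 0) as [->|Hs0]; [lra|].
  destruct (MVT_cor2 h (fun u => -(K*(b u - binf)*(b u)^3) * exp (L*u) + (b u - binf)*(L*exp (L*u))) 0 s) as [c [Hc1 Hc2]]; [lra| |].
  - intros c Hc. apply is_derive_Reals. unfold h.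
    assert (Hdc := Hd c ltac:(lra)).
    auto_derive. { exists (-(K*(b c - binf)*(b c)^3)). exact Hdc. }
    replace (Derive (fun x => b x) c) with (-(K*(b c - binf)*(b c)^3)) by (symmetry; exact (is_derive_unique _ _ _ Hdc)). ring.
  - assert (binf < b c) by (apply Hu; lra).
    assert (b c <= b0) by (apply dec_part; [lra| intros; apply Hu; lra]).
    assert (0 < exp (L*c)) by apply exp_pos.
    assert (b c ^3 <= b0 ^3) by (apply pow_incr; lra).
    assert (0 <= (b c - binf) * (L - K * b c ^3)).
    { apply Rmult_le_pos; [lra|]. unfold L. nra. }
    assert (0 <= -(K*(b c - binf)*(b c)^3) * exp (L*c) + (b c - binf)*(L*exp (L*c))) by (replace (-(K*(b c - binf)*(b c)^3) * exp (L*c) + (b c - binf)*(L*exp (L*c))) with (exp (L*c) * ((b c - binf) * (L - K * b c ^3))) by ring; apply Rmult_le_pos; lra).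
    assert (0 <= (-(K*(b c - binf)*(b c)^3) * exp (L*c) + (b c - binf)*(L*exp (L*c)))*(s-0)) by (apply Rmult_le_pos; lra).
    lra. }
unfold h in Hh. rewrite Rmult_0_r, exp_0, Rmult_1_r, Hb00 in Hh.
assert (E : exp (L*s) * exp (-(L*s)) = 1) by (rewrite <- exp_plus; replace (L*s + -(L*s)) with 0 by ring; apply exp_0).
assert (0 < exp (-(L*s))) by apply exp_pos.
assert (HH := Rmult_ge_compat_r (exp (-(L*s))) _ _ ltac:(lra) Hh).
replace ((b s - binf) * exp (L * s) * exp (-(L*s))) with ((b s - binf) * (exp (L * s) * exp (-(L*s)))) in HH by ring.
rewrite E in HH. lra.
Qed.

Definition delta := (b0 - binf) * exp (-(L*T)).

Lemma lower2 s : 0 <= s < T -> (forall u, 0 <= u <= s -> binf < b u) ->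
  b s >= binf + delta.
Proof.
intros Hs Hu. pose proof (lower s Hs Hu).
unfold delta.
assert (exp (-(L*T)) <= exp (-(L*s))).
{ apply exp_mono. assert (0 < L) by (unfold L; apply Rmult_lt_0_compat; [lra|apply pow_lt; lra]). nra. }
nra.
Qed.

Lemma ode_inv t : 0 <= t < T -> binf < b t <= b0.
Proof.
set (E := fun t => 0 <= t < T /\ forall u, 0 <= u <= t -> binf < b u).
assert (HB : bound E) by (exists T; intros x [Hx _]; lra).
assert (HE0 : exists x, E x).
{ exists 0. split; [lra|]. intros u Hu. replace u with 0 by lra. lra. }
destruct (completeness E HB HE0) as [m [Hm1 Hm2]].
assert (Hm0 : 0 <= m) by (apply Hm1; destruct HE0; unfold E; split; [lra| intros u Hu; replace u with 0 by lra; lra]).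
assert (HmT : m <= T) by (apply Hm2; intros x [Hx _]; lra).
assert (Hcl : forall s, 0 <= s < m -> forall u, 0 <= u <= s -> binf < b u).
{ intros s Hs u Hu.
  destruct (classic (exists e, E e /\ s < e)) as [[e [[He1 He2] He3]]|Hn].
  - apply He2. lra.
  - exfalso. assert (m <= s); [|lra]. apply Hm2. intros x Hx.
    apply Rnot_lt_le. intros Hx'. apply Hn. exists x. auto. }
assert (Hdp : 0 < delta).
{ unfold delta. apply Rmult_lt_0_compat; [lra| apply exp_pos]. }
assert (Hdle : delta <= b0 - binf).
{ unfold delta. assert (exp (-(L*T)) <= 1).
  { rewrite <- exp_0. apply exp_mono. assert (0 < L) by (unfold L; apply Rmult_lt_0_compat; [lra|apply pow_lt; lra]). nra. }
  nra. }
destruct (Req_dec m T) as [HmT'|HmT'].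
- intros Ht. split.
  + apply (Hcl t); lra.
  + apply dec_part; [lra|]. intros u Hu. apply (Hcl t); lra.
- exfalso.
  assert (Hc : continuity_pt b m).
  { apply derivable_continuous_pt. exists (-(K*(b m - binf)*(b m)^3)).
    apply is_derive_Reals. apply Hd. lra. }
  destruct (Hc (delta/2) ltac:(lra)) as [eta [Heta Hc']].
  assert (Hcm : forall x, Rabs (x - m) < eta -> Rabs (b x - b m) < delta/2).
  { intros x Hx. destruct (Req_dec x m) as [->|Hxm].
    - rewrite Rminus_diag, Rabs_R0. lra.
    - apply (Hc' x). split; [split; [exact I| auto]|]. exact Hx. }
  assert (Hbm : b m >= binf + delta/2).
  { destruct (Req_dec m 0) as [->|Hm00]; [lra|].
    set (s := Rmax 0 (m - eta/2)).
    assert (Hs : 0 <= s < m).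
    { unfold s. split; [apply Rmax_l|]. apply Rmax_lub_lt; lra. }
    assert (Hs2 : Rabs (s - m) < eta).
    { rewrite Rabs_left by lra. assert (m - eta/2 <= Rmax 0 (m - eta/2)) by apply Rmax_r. unfold s. lra. }
    pose proof (Hcm s Hs2). pose proof (lower2 s ltac:(lra) (Hcl s Hs)).
    apply Rabs_def2 in H. lra. }
  set (t' := Rmin (m + eta/2) ((m+T)/2)).
  assert (Ht'1 : m < t').
  { unfold t'. apply Rmin_glb_lt; lra. }
  assert (Ht'2 : t' <= m + eta/2) by apply Rmin_l.
  assert (Ht'3 : t' <= (m+T)/2) by apply Rmin_r.
  assert (E t').
  { split; [lra|]. intros u Hu.
    destruct (Rlt_le_dec u m).
    - apply (Hcl u); lra.
    - assert (Rabs (u - m) < eta) by (rewrite Rabs_right by lra; lra).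
      pose proof (Hcm u H). apply Rabs_def2 in H0. lra. }
  pose proof (Hm1 t' H). lra.
Qed.
End S.
Lemma final_ineq (m U k a binf b0 B y G : R) :
 1 <= m -> 1 < binf -> binf <= B <= b0 -> b0 < a -> 0 < k ->
 y^2 <= a^2-binf^2 -> G*G = (a^2-B^2)/(a^2-binf^2)*y^2 + B^2 -> 0 < G -> 0 <= U ->
 k*(G-1)*(a-G) <= U ->
 (B * (-((k*binf*(binf-1)*(a^2-b0^2))/(a*(a^2-binf^2)*(2*a^2-binf^2)^2)*(B-binf)*B^3)) * (a^2-binf^2 - y^2)/((a^2-binf^2)*G))
 - U*( ((a^2-B^2)/(a^2-binf^2)*B^2/G^3)/(1+((a^2-B^2)/(a^2-binf^2)*y/G)^2)
      + m*(y*((a^2-B^2)/(a^2-binf^2)*y/G) - G)/(y^2+G^2) ) >= 0.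
Proof.
intros Hm Hbi HB Hb0 Hk Hy HG HG0 HU0 HU.
set (D := a^2-binf^2) in *.
set (c := (a^2-B^2)/D) in *.
assert (HDe : D = a^2-binf^2) by reflexivity.
set (M := 2*a^2-binf^2).
assert (HD : 0 < D) by (unfold D; nra).
assert (HD2 : 0 < a^2 - binf^2) by nra.
assert (Hc0 : 0 <= c) by (unfold c; apply Rmult_le_pos; [nra| left; apply Rinv_0_lt_compat; lra]).
assert (Hc1 : 1 - c = (B-binf)*(B+binf)/D) by (unfold c, D; field; nra).
assert (Hy0 : 0 <= y^2) by nra.
assert (HGa : G <= a).
{ assert (G*G <= a*a).
  { rewrite HG. assert (c*y^2 <= c*D) by (apply Rmult_le_compat_l; lra).
    assert (c*D = a^2-B^2) by (unfold c; field; lra). nra. }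
  nra. }
assert (HGB : B <= G) by nra.
assert (HB2 : B^2 = G^2 - c*y^2) by nra.
set (P := G^2 + c^2*y^2).
set (Q := y^2 + G^2).
assert (HP : 0 < P) by (unfold P; nra).
assert (HQ : 0 < Q) by (unfold Q; nra).
assert (Hc1' : c <= 1) by (assert (0 <= (B-binf)*(B+binf)/D) by (apply Rmult_le_pos; [nra| left; apply Rinv_0_lt_compat; lra]); lra).
assert (HPQ : P <= Q) by (unfold P, Q; assert (c^2 <= 1) by nra; nra).
assert (HQM : Q <= M) by (unfold Q, M; assert (G*G <= a*a) by (apply Rmult_le_compat; lra); nra).
assert (Eg2 : (c*B^2/G^3)/(1+(c*y/G)^2) = c*B^2/(G*P)) by (unfold P; field; split; nra).
assert (Eg1 : y*(c*y/G) - G = -(B^2)/G) by (rewrite HB2; field; lra).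
rewrite Eg2, Eg1. fold Q.
assert (HS : c*B^2/(G*P) + m*(-(B^2)/G)/Q <= -((1-c)*B^4/(G*P*Q))).
{ assert (m*(-(B^2)/G)/Q <= -(B^2)/(G*Q)).
  { replace (m*(-(B^2)/G)/Q) with (-(m*(B^2/(G*Q)))) by (field; lra).
    assert (0 <= B^2/(G*Q)) by (apply Rmult_le_pos; [nra| left; apply Rinv_0_lt_compat; nra]).
    replace (-(B^2)/(G*Q)) with (-(B^2/(G*Q))) by (field; lra). nra. }
  assert (c*B^2/(G*P) - B^2/(G*Q) = -((1-c)*B^4/(G*P*Q))).
  { replace (B^4) with (B^2*B^2) by ring. rewrite HB2 at 3. unfold P, Q. field. split; nra. }
  replace (-(B^2)/(G*Q)) with (-(B^2/(G*Q))) in H by (field; lra). lra. }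
assert (HUS : -(U * (c*B^2/(G*P) + m*(-(B^2)/G)/Q)) >= U*((1-c)*B^4/(G*P*Q))).
{ assert (U * (c*B^2/(G*P) + m*(-(B^2)/G)/Q) <= U*(-((1-c)*B^4/(G*P*Q)))) by (apply Rmult_le_compat_l; lra). lra. }
assert (HaG : a - G >= (a^2-b0^2)*(D-y^2)/(2*a*D)).
{ assert (E1 : (a-G)*(a+G) = (a^2-B^2)*(D-y^2)/D).
  { replace ((a-G)*(a+G)) with (a^2 - G*G) by ring. rewrite HG. unfold c. field. lra. }
  assert (E2 : (a^2-b0^2)*(D-y^2)/D <= (a^2-B^2)*(D-y^2)/D).
  { unfold Rdiv. apply Rmult_le_compat_r; [left; apply Rinv_0_lt_compat; lra|]. apply Rmult_le_compat_r; nra. }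
  assert (E3 : 0 <= (a^2-b0^2)*(D-y^2)/D) by (apply Rmult_le_pos; [apply Rmult_le_pos; nra| left; apply Rinv_0_lt_compat; lra]).
  assert ((a^2-b0^2)*(D-y^2)/(2*a*D) = ((a^2-b0^2)*(D-y^2)/D)/(2*a)) by (field; lra).
  rewrite H. apply Rle_ge. apply Rmult_le_reg_r with (2*a); [lra|].
  replace ((a^2-b0^2)*(D-y^2)/D/(2*a)*(2*a)) with ((a^2-b0^2)*(D-y^2)/D) by (field; lra).
  nra. }
set (W := (a^2-b0^2)*(D-y^2)/(2*a*D)) in *.
assert (HW : 0 <= W) by (unfold W; apply Rmult_le_pos; [apply Rmult_le_pos; nra| left; apply Rinv_0_lt_compat; nra]).
assert (HUl : k*(binf-1)*W <= U).
{ assert (k*(binf-1)*W <= k*(G-1)*(a-G)); [|lra].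
  apply Rmult_le_compat; try nra. }
set (Kc := k*binf*(binf-1)*(a^2-b0^2)/(a*D*M^2)).
assert (HK : Kc*(D-y^2) = k*(binf-1)*W * (2*binf/M^2)) by (unfold Kc, W; field; split; nra).
assert (HKey : U*(B+binf)/(P*Q) >= Kc*(D-y^2)).
{ rewrite HK.
  assert (U*(B+binf)/(P*Q) >= U*(2*binf/M^2)).
  { assert (2*binf/M^2 <= (B+binf)/(P*Q)).
    { apply Rle_trans with (2*binf/(P*Q)).
      - unfold Rdiv. apply Rmult_le_compat_l; [lra|]. apply Rinv_le_contravar; [nra|]. 
        assert (P*Q <= Q*Q) by nra. assert (Q*Q <= M*M) by nra. nra.
      - unfold Rdiv. apply Rmult_le_compat_r; [left; apply Rinv_0_lt_compat; nra| lra]. }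
    unfold Rdiv in *. replace (U*(B+binf)*/(P*Q)) with (U*((B+binf)*/(P*Q))) by ring.
    apply Rle_ge. apply Rmult_le_compat_l; lra. }
  assert (U*(2*binf/M^2) >= k*(binf-1)*W*(2*binf/M^2)); [|lra].
  apply Rle_ge. apply Rmult_le_compat_r; [|lra].
  unfold Rdiv. apply Rmult_le_pos; [lra| left; apply Rinv_0_lt_compat; nra]. }
assert (Hfac : 0 <= (B-binf)*B^4/(D*G)) by (apply Rmult_le_pos; [apply Rmult_le_pos; nra| left; apply Rinv_0_lt_compat; nra]).
assert (E4 : U*((1-c)*B^4/(G*P*Q)) = (U*(B+binf)/(P*Q)) * ((B-binf)*B^4/(D*G))).
{ rewrite Hc1. field. repeat split; nra. }
assert (E5 : B * (-(Kc*(B-binf)*B^3)) * (D - y^2)/(D*G)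
  = - ((Kc*(D-y^2)) * ((B-binf)*B^4/(D*G)))).
{ unfold Kc. field. repeat split; nra. }
rewrite E5.
assert ((U*(B+binf)/(P*Q)) * ((B-binf)*B^4/(D*G)) >= (Kc*(D-y^2)) * ((B-binf)*B^4/(D*G))).
{ apply Rle_ge, Rmult_le_compat_r; lra. }
lra.
Qed.

Theorem lemma3p2 (n : nat) (a k binf b0 T : R) (upp : R -> R) (b : R -> R) :
  (2 <= n)%nat -> 1 < a -> 0 < k ->
  (forall x, 1 <= x <= a -> 0 <= upp x) ->
  (forall x, 1 <= x <= a -> k * (x - 1) * (a - x) <= upp x) ->
  1 < binf -> binf < b0 -> b0 < a ->
  0 < T ->
  b 0 = b0 ->
  (forall t, 0 <= t < T ->
     is_derive b t
       (- (k * binf * (binf - 1) * (a ^ 2 - b0 ^ 2) * (b t - binf) * (b t) ^ 3)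
        / (a * (a ^ 2 - binf ^ 2) * (2 * a ^ 2 - binf ^ 2) ^ 2))) ->
  forall t y, 0 <= t < T ->
    - sqrt (a ^ 2 - binf ^ 2) <= y <= sqrt (a ^ 2 - binf ^ 2) ->
    Derive (fun s => gbar a binf b s y) t
      - flow_op n upp (gbar a binf b t) y >= 0.
Proof.
intros Hn Ha Hk Hu0 Hu Hbi Hbb Hb0 HT Hb00 Hd t y Ht Hy.
set (D := a^2 - binf^2).
assert (HD : 0 < D) by (unfold D; nra).
assert (HD2 : 0 < a^2 - binf^2) by nra.
set (Kc := k*binf*(binf-1)*(a^2-b0^2)/(a*D*(2*a^2-binf^2)^2)).
assert (HKc : 0 < Kc).
{ unfold Kc. apply Rmult_lt_0_compat.
  - apply Rmult_lt_0_compat; [|nra]. apply Rmult_lt_0_compat; [nra|lra].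
  - apply Rinv_0_lt_compat. apply Rmult_lt_0_compat; [nra|]. apply pow_lt. nra. }
assert (Hd' : forall t, 0 <= t < T -> is_derive b t (-(Kc*(b t - binf)*(b t)^3))).
{ intros t0 Ht0.
  replace (-(Kc*(b t0 - binf)*(b t0)^3)) with
   (- (k * binf * (binf - 1) * (a ^ 2 - b0 ^ 2) * (b t0 - binf) * (b t0) ^ 3)
        / (a * (a ^ 2 - binf ^ 2) * (2 * a ^ 2 - binf ^ 2) ^ 2)).
  - apply Hd; exact Ht0.
  - unfold Kc, D. field. repeat split; nra. }
assert (HB := ode_inv Kc b0 binf T b HKc ltac:(lra) Hbb HT Hb00 Hd' t Ht).
assert (Hy2 : y^2 <= D).
{ assert (Hs := sqrt_sqrt D ltac:(lra)). assert (0 <= sqrt D) by apply sqrt_pos.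
  unfold D in *. nra. }
set (B := b t) in *.
set (c := (a^2-B^2)/D).
assert (Hc0 : 0 <= c) by (unfold c; apply Rmult_le_pos; [nra| left; apply Rinv_0_lt_compat; lra]).
assert (Harg : forall z, 0 < c*z^2 + B^2) by (intros z; assert (0 <= c*z^2) by (apply Rmult_le_pos; nra); nra).
set (G := sqrt (c*y^2+B^2)).
assert (HG0 : 0 < G) by (apply sqrt_lt_R0; apply Harg).
assert (HGG : G*G = c*y^2+B^2) by (apply sqrt_sqrt; left; apply Harg).
assert (HGe : forall z, z = c*y^2+B^2 -> sqrt z = G) by (intros z ->; reflexivity).
assert (Hdt : Derive (fun s => gbar a binf b s y) t = B*(-(Kc*(B-binf)*B^3))*(D-y^2)/(D*G)).
{ apply is_derive_unique. unfold gbar. assert (Hdt := Hd' t Ht). auto_derive.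
  - repeat split; try (eexists; exact Hdt). pose proof (Harg y). unfold c, D in H. exact H.
  - replace (Derive (fun x => b x) t) with (-(Kc*(B-binf)*B^3)) by (symmetry; apply is_derive_unique; exact Hdt).
    erewrite HGe; change (b t) with B; [unfold D; field; repeat split; lra | unfold c, D; field; lra]. }
assert (Hd1 : forall z, Derive (gbar a binf b t) z = c*z/sqrt (c*z^2+B^2)).
{ intros z. apply is_derive_unique. change (gbar a binf b t) with (fun z => sqrt (c*z^2+B^2)).
  pose proof (Harg z). auto_derive; [lra|]. replace (c*(z*(z*1)) + B*(B*1)) with (c*z^2+B^2) by ring. field. apply Rgt_not_eq, sqrt_lt_R0. exact H. }
assert (Hd2 : Derive_n (gbar a binf b t) 2 y = c*B^2/G^3).
{ simpl. rewrite (Derive_ext (fun x => Derive (fun x0 => gbar a binf b t x0) x) (fun z => c*z/sqrt (c*z^2+B^2)) y Hd1). apply is_derive_unique.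
  pose proof (Harg y). auto_derive.
  - repeat split; [lra| apply Rgt_not_eq, sqrt_lt_R0; exact H].
  - erewrite HGe; [|ring]. replace (B*(B*1)) with (G*G - c*y^2) by lra. field. lra. }
unfold flow_op. rewrite Hd2, Hd1, Hdt.
change (gbar a binf b t y) with G. fold G.
assert (HcD : c*D = a^2 - B^2) by (unfold c; field; lra).
assert (HGa : G <= a).
{ assert (c*y^2 <= c*D) by (apply Rmult_le_compat_l; lra). nra. }
assert (HGB : B <= G) by nra.
assert (Hn2 : 1 <= INR n - 1).
{ assert (INR 2 <= INR n) by (apply le_INR; exact Hn). simpl in H. lra. }
apply (final_ineq (INR n - 1) (upp G) k a binf b0 B y G Hn2 Hbi ltac:(lra) Hb0 Hk Hy2 HGG HG0).
- apply Hu0. lra.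
- apply Hu. lra.
Qed.
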